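(* Let $d\ge1$, let $H,A\subset\mathbb{R}^d$ be nonempty, let $R>0$ and $\Delta$ be reals with $d(H,A)\ge R\ge\Delta\ge0$, and let $0\le s\le d$. Then $$\mathcal{H}^s(T_\Delta A)\ge\left(\frac{R-\Delta}{R}\right)^s\mathcal{H}^s(A),$$ with the convention $0^0:=0$ (relevant when $s=0$ and $R=\Delta$).
   Context: $\mathcal{H}^s$ denotes the $s$-dimensional outer Hausdorff measure on $\mathbb{R}^d$. $d(\cdot,\cdot)$ is Euclidean distance, $d(x,H)=\inf_{z\in H}|x-z|$ and $d(H,A)=\inf_{x\in A}d(x,H)$. Let $\bar H$ be the closure of $H$; for each $x$ let $\pi(x)\in\bar H$ be a point with $|x-\pi(x)|=d(x,H)$ (any one if several). For $\Delta\ge0$, $T_\Delta x:=x+\Delta\frac{\pi(x)-x}{|\pi(x)-x|}$ if $d(x,H)>\Delta$ and $T_\Delta x:=\pi(x)$ if $d(x,H)\le\Delta$. *)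

(* Defs.v *)
From HB Require Import structures.
From mathcomp Require Import all_boot all_order all_algebra.
From mathcomp Require Import all_classical all_reals all_analysis.
Set Implicit Arguments. Unset Strict Implicit. Unset Printing Implicit Defensive.
Import Order.TTheory GRing.Theory Num.Theory.
Local Open Scope classical_set_scope.
Local Open Scope ring_scope.

Section Defs.
Variables (R : realType) (d : nat).
Notation V := 'rV[R]_d.

(* Euclidean norm and distance on R^d (the library's norm on 'rV is the sup norm). *)
Definition enorm (x : V) : R := Num.sqrt (\sum_(i < d) (x ord0 i) ^+ 2).
Definition edist (x y : V) : R := enorm (x - y).

Definition dist_pt (x : V) (H : set V) : R := inf [set edist x z | z in H].
Definition dist_set (H A : set V) : R := inf [set dist_pt x H | x in A].

Definition in_eclosure (H : set V) (y : V) : Prop :=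
  forall e : R, 0 < e -> exists2 z, H z & edist y z < e.

Definition nearest_map (H : set V) (pi : V -> V) : Prop :=
  forall x, in_eclosure H (pi x) /\ edist x (pi x) = dist_pt x H.

Definition Tmap (H : set V) (pi : V -> V) (Delta : R) (x : V) : V :=
  if Delta < dist_pt x H then x + (Delta / edist (pi x) x) *: (pi x - x)
  else pi x.

(* Euclidean diameter (extended real; -oo for the empty set) *)
Definition ediam (U : set V) : \bar R :=
  ereal_sup [set (edist p.1 p.2)%:E | p in U `*` U].

(* diam(U)^s, with diam(empty)^s = 0 and, for nonempty U, 0^0 = 1 (powR) *)
Definition hterm (s : R) (U : set V) : \bar R :=
  match ediam U with
  | EFin r => (r `^ s)%:E
  | +oo%E => +oo%E
  | -oo%E => 0%E
  end.

Definition hausdorff_pre (s delta : R) (E : set V) : \bar R :=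
  ereal_inf [set (\sum_(0 <= i <oo) hterm s (U i))%E | U in
     [set U : nat -> set V | E `<=` \bigcup_i U i /\
                              forall i, (ediam (U i) <= delta%:E)%E]].

(* H^s(E) = lim_{delta -> 0+} H^s_delta(E) = sup_{delta > 0} H^s_delta(E) *)
Definition hausdorff (s : R) (E : set V) : \bar R :=
  ereal_sup [set hausdorff_pre s delta E | delta in [set delta : R | 0 < delta]].

End Defs.

Definition shrink_factor (R : realType) (r Delta s : R) : R :=
  if r - Delta == 0 then 0 else ((r - Delta) / r) `^ s.

(* Main.v *)
Require Import Defs.
From HB Require Import structures.
From mathcomp Require Import all_boot all_order all_algebra.
From mathcomp Require Import all_classical all_reals all_analysis.
From mathcomp Require Import ring lra.
Set Implicit Arguments. Unset Strict Implicit. Unset Printing Implicit Defensive.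
Import Order.TTheory GRing.Theory Num.Theory.
Local Open Scope classical_set_scope.
Local Open Scope ring_scope.

Lemma real_key (R : realType) (W P Q Z G Dx Dy r Dl : R) :
  Dx ^+ 2 <= W + 2 * Q + Dy ^+ 2 ->
  Dy ^+ 2 <= Dx ^+ 2 - 2 * P + W ->
  G = - W + Dl / Dx * P - Dl / Dy * Q ->
  0 <= Z + 2 * ((r - Dl) / r) * G + ((r - Dl) / r) ^+ 2 * W ->
  0 < r -> r <= Dx -> r <= Dy -> 0 <= Dl -> Dl <= r -> 0 <= W ->
  ((r - Dl) / r) ^+ 2 * W <= Z.
Proof.
move=> h1 h2 hG h3 r0 rx ry l0 lr W0.
have x0 : 0 < Dx by exact: (Order.POrderTheory.lt_le_trans r0 rx).
have y0 : 0 < Dy by exact: (Order.POrderTheory.lt_le_trans r0 ry).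
have key : Dy * r * P - Dx * r * Q <= Dx * Dy * W.
  have e1 : 2 * (Dy * r * P) <= Dy * r * (W + Dx ^+ 2 - Dy ^+ 2).
    rewrite mulrCA ler_pM2l ?mulr_gt0 //; lra.
  have e2 : - 2 * (Dx * r * Q) <= Dx * r * (W + Dy ^+ 2 - Dx ^+ 2).
    rewrite mulrCA mulNr -mulrN ler_pM2l ?mulr_gt0 //; lra.
  have e3 : r * (Dx + Dy) * W <= 2 * (Dx * Dy) * W.
    apply: ler_wpM2r => //.
    have f1 : r * Dx <= Dy * Dx by rewrite ler_pM2r.
    have f2 : r * Dy <= Dx * Dy by rewrite ler_pM2r.
    lra.
  have e4 : 0 <= r * (Dx - Dy) ^+ 2 * (Dx + Dy).
    apply: mulr_ge0; last lra.
    by apply: mulr_ge0; [lra | exact: sqr_ge0].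
  nra.
have key2 : Dl / Dx * P - Dl / Dy * Q <= Dl / r * W.
  have : Dl / Dx * P - Dl / Dy * Q = Dl * (Dy * r * P - Dx * r * Q) / (Dx * Dy * r).
    by field; rewrite ?mulf_neq0 ?gt_eqF.
  move=> ->; rewrite ler_pdivrMr ?mulr_gt0 //.
  have -> : Dl / r * W * (Dx * Dy * r) = Dl * (Dx * Dy * W) by field; rewrite gt_eqF.
  by apply: ler_wpM2l.
set c := (r - Dl) / r.
have c0 : 0 <= c by rewrite divr_ge0 //; lra.
have hc : c = 1 - Dl / r by rewrite /c mulrBl divff ?gt_eqF.
have hcG : c * W <= - G by rewrite hG hc; lra.
have h4 : c * (c * W) <= c * (- G) by apply: ler_wpM2l.
rewrite -/c in h3.
lra.
Qed.

Section Vec.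
Variables (R : realType) (d : nat).
Notation V := 'rV[R]_d.

Definition dot (u v : V) : R := \sum_(i < d) u ord0 i * v ord0 i.

Lemma dotC u v : dot u v = dot v u.
Proof. by apply: eq_bigr => i _; rewrite mulrC. Qed.
Lemma dotDl u v w : dot (u + v) w = dot u w + dot v w.
Proof. by rewrite /dot -big_split; apply: eq_bigr => i _; rewrite !mxE mulrDl. Qed.
Lemma dotNl u w : dot (- u) w = - dot u w.
Proof. by rewrite /dot -sumrN; apply: eq_bigr => i _; rewrite !mxE mulNr. Qed.
Lemma dotZl k u w : dot (k *: u) w = k * dot u w.
Proof. by rewrite /dot mulr_sumr; apply: eq_bigr => i _; rewrite !mxE mulrA. Qed.
Lemma dotBl u v w : dot (u - v) w = dot u w - dot v w.
Proof. by rewrite dotDl dotNl. Qed.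
Lemma dotDr u v w : dot w (u + v) = dot w u + dot w v.
Proof. by rewrite dotC dotDl !(dotC w). Qed.
Lemma dotBr u v w : dot w (u - v) = dot w u - dot w v.
Proof. by rewrite dotC dotBl !(dotC w). Qed.
Lemma dotZr k u w : dot w (k *: u) = k * dot w u.
Proof. by rewrite dotC dotZl dotC. Qed.
Lemma dotNr u w : dot w (- u) = - dot w u.
Proof. by rewrite dotC dotNl dotC. Qed.

Lemma dot_ge0 (u : V) : 0 <= dot u u.
Proof. by apply: sumr_ge0 => i _; rewrite -expr2 sqr_ge0. Qed.

Lemma enormE (u : V) : enorm u = Num.sqrt (dot u u).
Proof. by rewrite /enorm /dot; congr Num.sqrt; apply: eq_bigr => i _; rewrite expr2. Qed.

Lemma enorm_ge0 (u : V) : 0 <= enorm u.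
Proof. by rewrite enormE sqrtr_ge0. Qed.

Lemma enorm_sq (u : V) : enorm u ^+ 2 = dot u u.
Proof. by rewrite enormE sqr_sqrtr // dot_ge0. Qed.

Lemma dot0 (u : V) : dot u u = 0 -> forall v, dot u v = 0.
Proof.
move=> h v; rewrite /dot big1 // => i _.
have /psumr_eq0P h2 : \sum_(i < d) u ord0 i * u ord0 i = 0 by [].
have : u ord0 i * u ord0 i = 0 by apply: h2 => // j _; rewrite -expr2 sqr_ge0.
by move/eqP; rewrite mulf_eq0 orbb => /eqP ->; rewrite mul0r.
Qed.

Lemma cauchy_schwarz (u v : V) : dot u v <= enorm u * enorm v.
Proof.
have [a0|a0] := eqVneq (enorm u) 0.
  have : dot u u = 0 by rewrite -enorm_sq a0 expr2 mul0r.
  by move/dot0 => ->; rewrite a0 mul0r.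
have [b0|b0] := eqVneq (enorm v) 0.
  have : dot v v = 0 by rewrite -enorm_sq b0 expr2 mul0r.
  by move/dot0 => h; rewrite dotC h b0 mulr0.
set a := enorm u; set b := enorm v.
have ha : 0 < a by rewrite lt0r a0 enorm_ge0.
have hb : 0 < b by rewrite lt0r b0 enorm_ge0.
have h := dot_ge0 (b *: u - a *: v).
rewrite !(dotBl, dotBr, dotZl, dotZr) -!enorm_sq -/a -/b (dotC v u) in h.
have hab : 0 < a * b by rewrite mulr_gt0.
rewrite -(ler_pM2l hab).
nra.
Qed.

Lemma enormD (u v : V) : enorm (u + v) <= enorm u + enorm v.
Proof.
have h0 : 0 <= enorm u + enorm v by rewrite addr_ge0 ?enorm_ge0.
rewrite -(ger0_norm h0) -sqrtr_sqr enormE ler_sqrt ?sqr_ge0 //.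
rewrite !(dotDl, dotDr) (dotC v u) -!enorm_sq.
have := cauchy_schwarz u v; nra.
Qed.

Lemma enormN (u : V) : enorm (- u) = enorm u.
Proof. by rewrite !enormE dotNl dotNr opprK. Qed.

Lemma edistC (x y : V) : Defs.edist x y = Defs.edist y x.
Proof. by rewrite /Defs.edist -enormN opprB. Qed.

Lemma edist_ge0 (x y : V) : 0 <= Defs.edist x y.
Proof. exact: enorm_ge0. Qed.

Lemma edist_tri (x y z : V) : Defs.edist x z <= Defs.edist x y + Defs.edist y z.
Proof. by rewrite /Defs.edist (_ : x - z = (x - y) + (y - z)) ?enormD // addrA subrK. Qed.


Lemma colip (x y px py : V) (Dx Dy r Dl : R) :
  dot (px - x) (px - x) = Dx ^+ 2 -> dot (py - y) (py - y) = Dy ^+ 2 ->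
  Dx ^+ 2 <= dot (py - x) (py - x) -> Dy ^+ 2 <= dot (px - y) (px - y) ->
  0 < r -> r <= Dx -> r <= Dy -> 0 <= Dl -> Dl <= r ->
  ((r - Dl) / r) ^+ 2 * dot (y - x) (y - x) <=
  dot ((x + (Dl / Dx) *: (px - x)) - (y + (Dl / Dy) *: (py - y)))
      ((x + (Dl / Dx) *: (px - x)) - (y + (Dl / Dy) *: (py - y))).
Proof.
move=> ha hb h1 h2 r0 rx ry l0 lr.
set w := y - x; set a := px - x; set b := py - y.
set z := (x + (Dl / Dx) *: a) - (y + (Dl / Dy) *: b).
have ez : z = (Dl / Dx) *: a - (Dl / Dy) *: b - w.
  by apply/rowP => i; rewrite /z /w !mxE; ring.
have e1 : py - x = w + b by apply/rowP => i; rewrite /w /b !mxE; ring.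
have e2 : px - y = a - w by apply/rowP => i; rewrite /w /a !mxE; ring.
rewrite e1 in h1; rewrite e2 in h2.
rewrite -/a in ha; rewrite -/b in hb.
clearbody z w a b.
apply: (@real_key R (dot w w) (dot w a) (dot w b) (dot z z) (dot z w) Dx Dy r Dl) => //.
- move: h1; rewrite !(dotDl, dotDr) hb (dotC b w); lra.
- move: h2; rewrite !(dotBl, dotBr) ha (dotC a w); lra.
- rewrite ez !(dotBl, dotZl) (dotC a w) (dotC b w); ring.
- have := dot_ge0 (z + ((r - Dl) / r) *: w).
  rewrite !(dotDl, dotDr, dotZl, dotZr) (dotC w z); lra.
- exact: dot_ge0.
Qed.

Lemma dist_pt_ge0 (x : V) (H : set V) : H !=set0 -> 0 <= dist_pt x H.
Proof.
move=> [z Hz]; rewrite /dist_pt; apply: lb_le_inf.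
  by exists (Defs.edist x z); exists z.
by move=> _ [y _ <-]; exact: edist_ge0.
Qed.

Lemma dist_pt_le (x : V) (H : set V) z : H z -> dist_pt x H <= Defs.edist x z.
Proof.
move=> Hz; rewrite /dist_pt; apply: ge_inf; last by exists z.
by exists 0 => _ [y _ <-]; exact: edist_ge0.
Qed.

Lemma dist_pt_cl (x : V) (H : set V) p : in_eclosure H p -> dist_pt x H <= Defs.edist x p.
Proof.
move=> hp; apply/ler_addgt0Pr => e e0.
have [z Hz hz] := hp e e0.
apply: (le_trans (dist_pt_le x Hz)).
apply: (le_trans (edist_tri x p z)).
by rewrite lerD2l ltW.
Qed.

Lemma dist_set_le (H A : set V) x : H !=set0 -> A x -> dist_set H A <= dist_pt x H.
Proof.
move=> H0 Ax; rewrite /dist_set; apply: ge_inf; last by exists x.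
by exists 0 => _ [y _ <-]; exact: dist_pt_ge0.
Qed.

Lemma Tmap_colip (H A : set V) pi (r Dl : R) :
  H !=set0 -> nearest_map H pi -> 0 < r -> r <= dist_set H A -> 0 <= Dl -> Dl < r ->
  forall x y, A x -> A y ->
  (r - Dl) / r * Defs.edist x y <= Defs.edist (Tmap H pi Dl x) (Tmap H pi Dl y).
Proof.
move=> H0 hpi r0 rA l0 lr x y Ax Ay.
have rx : r <= dist_pt x H := le_trans rA (dist_set_le H0 Ax).
have ry : r <= dist_pt y H := le_trans rA (dist_set_le H0 Ay).
have [_ ex] := hpi x; have [cy ey] := hpi y; have [cx _] := hpi x.
rewrite /Tmap (lt_le_trans lr rx) (lt_le_trans lr ry).
rewrite (edistC (pi x)) ex (edistC (pi y)) ey.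
set Dx := dist_pt x H in rx ex *; set Dy := dist_pt y H in ry ey *.
have hc : 0 <= (r - Dl) / r by rewrite divr_ge0 // ?subr_ge0 ltW.
have := @colip x y (pi x) (pi y) Dx Dy r Dl.
rewrite -!enorm_sq -/(Defs.edist (pi x) x) -/(Defs.edist (pi y) y).
rewrite -/(Defs.edist (pi y) x) -/(Defs.edist (pi x) y).
rewrite (edistC (pi x)) ex (edistC (pi y)) ey.
move=> /(_ erefl erefl) h.
have Dx0 : 0 <= Dx by exact: dist_pt_ge0.
have Dy0 : 0 <= Dy by exact: dist_pt_ge0.
have h1 : Dx ^+ 2 <= Defs.edist (pi y) x ^+ 2.
  by rewrite ler_sqr ?nnegrE ?edist_ge0 // edistC dist_pt_cl.
have h2 : Dy ^+ 2 <= Defs.edist (pi x) y ^+ 2.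
  by rewrite ler_sqr ?nnegrE ?edist_ge0 // edistC dist_pt_cl.
have {h1 h2} := h h1 h2 r0 rx ry l0 (ltW lr).
rewrite !enorm_sq => {}h.
rewrite /Defs.edist !enormE.
rewrite -(ger0_norm hc) -sqrtr_sqr -sqrtrM ?sqr_ge0 // ler_sqrt ?dot_ge0 //.
by rewrite -(opprB y x) dotNl dotNr opprK.
Qed.

Local Open Scope ereal_scope.

Lemma hterm_ge0 (s : R) (U : set V) : 0 <= hterm s U.
Proof. by rewrite /hterm; case: (ediam U) => [r| |] //; rewrite lee_fin powR_ge0. Qed.

Lemma ediam_fin_ge0 (U : set V) (r : R) : ediam U = r%:E -> (0 <= r)%R.
Proof.
move=> e.
have [[x Ux]|U0] := pselect (U !=set0).
  rewrite -lee_fin -e /ediam; apply: ereal_sup_ubound.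
  by exists (x, x) => //=; rewrite /Defs.edist subrr enormE /dot big1 ?sqrtr0 // => i _; rewrite mxE mul0r.
move: e; rewrite /ediam.
suff -> : [set (Defs.edist p.1 p.2)%:E | p in U `*` U] = set0 by rewrite ereal_sup0.
apply/seteqP; split=> // _ [[p q] [/= Up _] _]; apply: U0; by exists p.
Qed.

Lemma ediam_le (f : V -> V) (U W : set V) (c : R) : (0 < c)%R ->
  (forall p, W p -> U (f p)) ->
  (forall p q, W p -> W q -> (c * Defs.edist p q <= Defs.edist (f p) (f q))%R) ->
  ediam W <= ediam U * (c^-1)%:E.
Proof.
move=> c0 hU hL; apply: ge_ereal_sup => _ [[p q] [/= Wp Wq] <-].
rewrite lee_pdivlMr // -EFinM /ediam.
apply: le_trans (_ : (Defs.edist (f p) (f q))%:E <= _).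
  by rewrite lee_fin mulrC hL.
by apply: ereal_sup_ubound; exists (f p, f q) => //; split; apply: hU.
Qed.

Lemma hterm_le (f : V -> V) (U W : set V) (c s : R) : (0 < c)%R -> (0 <= s)%R ->
  (forall p, W p -> U (f p)) ->
  (forall p q, W p -> W q -> (c * Defs.edist p q <= Defs.edist (f p) (f q))%R) ->
  (c `^ s)%:E * hterm s W <= hterm s U.
Proof.
move=> c0 s0 hU hL; have h := ediam_le c0 hU hL.
rewrite /hterm; case eW: (ediam W) h => [rw| |] h.
- have rw0 := ediam_fin_ge0 eW.
  case eU: (ediam U) h => [ru| |] h.
  + rewrite -EFinM lee_fin -powRM ?(ltW c0) //.
    have ru0 := ediam_fin_ge0 eU.
    apply: ge0_ler_powR => //; rewrite ?nnegrE ?mulr_ge0 ?(ltW c0) //.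
    by move: h; rewrite -EFinM lee_fin ler_pdivlMr // mulrC.
  + exact: leey.
  + by move: h; rewrite gt0_mulNye // lte_fin invr_gt0.
- case eU: (ediam U) h => [ru| |] h //.
  + exact: leey.
  + by move: h; rewrite gt0_mulNye // lte_fin invr_gt0.
- by rewrite mule0 hterm_ge0.
Qed.

Lemma pre_le (f : V -> V) (A : set V) (c s delta : R) : (0 < c)%R -> (0 <= s)%R ->
  (forall p q, A p -> A q -> (c * Defs.edist p q <= Defs.edist (f p) (f q))%R) ->
  (c `^ s)%:E * hausdorff_pre s delta A <= hausdorff_pre s (c * delta) (f @` A).
Proof.
move=> c0 s0 hL.
have k0 : 0 <= (c `^ s)%:E by rewrite lee_fin powR_ge0.
apply: le_ereal_inf_tmp => _ [U [cov diam] <-].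
pose W i := A `&` (f @^-1` U i).
have hUi i : forall p, W i p -> U i (f p) by move=> p [].
have hLi i : forall p q, W i p -> W i q -> (c * Defs.edist p q <= Defs.edist (f p) (f q))%R.
  by move=> p q [Ap _] [Aq _]; apply: hL.
apply: (le_trans (_ : _ <= (c `^ s)%:E * \sum_(0 <= i <oo) hterm s (W i))).
  apply: lee_wpmul2l => //; apply: ereal_inf_lbound; exists W => //; split.
    move=> x Ax; have [i _ Ui] := cov (f x) (ex_intro2 _ _ x Ax erefl).
    by exists i.
  move=> i; apply: (le_trans (ediam_le c0 (hUi i) (hLi i))).
  have -> : delta%:E = (c * delta)%:E * (c^-1)%:E.
    by rewrite -EFinM mulrAC divff ?gt_eqF // mul1r.
  by apply: lee_wpmul2r => //; rewrite lee_fin invr_ge0 ltW.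
rewrite -nneseriesZl; last by move=> i _; exact: hterm_ge0.
apply: lee_nneseries.
  by move=> i _ _; rewrite mule_ge0 // hterm_ge0.
by move=> i _; apply: (hterm_le c0 s0 (hUi i) (hLi i)).
Qed.

Lemma haus_le (f : V -> V) (A : set V) (c s : R) : (0 < c)%R -> (0 <= s)%R ->
  (forall p q, A p -> A q -> (c * Defs.edist p q <= Defs.edist (f p) (f q))%R) ->
  (c `^ s)%:E * hausdorff s A <= hausdorff s (f @` A).
Proof.
move=> c0 s0 hL; have k0 : (0 < c `^ s)%R by rewrite powR_gt0.
rewrite -lee_pdivlMl //; apply: ge_ereal_sup => _ [delta delta0 <-].
rewrite lee_pdivlMl //; apply: le_trans (pre_le delta c0 s0 hL) _.
by apply: ereal_sup_ubound; exists (c * delta)%R => //=; rewrite mulr_gt0.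
Qed.

Lemma haus_ge0 (s : R) (E : set V) : 0 <= hausdorff s E.
Proof.
apply: le_trans (_ : hausdorff_pre s 1 E <= _); last first.
  by apply: ereal_sup_ubound; exists 1%R => //=; rewrite ltr01.
apply: le_ereal_inf_tmp => _ [U _ <-].
by apply: nneseries_ge0 => i _ _; exact: hterm_ge0.
Qed.

End Vec.

Unset Implicit Arguments.

Theorem proposition2 (R : realType) (d : nat) (H A : set 'rV[R]_d)
  (pi : 'rV[R]_d -> 'rV[R]_d) (r Delta s : R) :
  (1 <= d)%N -> H !=set0 -> A !=set0 -> nearest_map H pi ->
  0 < r -> r <= dist_set H A -> 0 <= Delta -> Delta <= r ->
  0 <= s -> s <= d%:R ->
  ((shrink_factor r Delta s)%:E * hausdorff s A <= hausdorff s (Tmap H pi Delta @` A))%E.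
Proof.
move=> d1 H0 A0 hpi r0 rA l0 lr s0 sd.
rewrite /shrink_factor; case: eqP => e.
  by rewrite mul0e haus_ge0.
have lr' : Delta < r.
  by rewrite lt_neqAle lr andbT; apply/eqP => h; apply: e; rewrite h subrr.
have c0 : 0 < (r - Delta) / r by rewrite divr_gt0 // subr_gt0.
apply: haus_le c0 s0 _.
exact: Tmap_colip.
Qed.
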